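(* Fix $\theta>0$. As $N\to\infty$: - $\kappa_N(\theta)/N\to e^{-1/\theta}$; - the optimal winning probability $W(N,\kappa_N(\theta))/[N]_\theta\to 1/e$. In particular, the limit of the optimal winning probability does not depend on $\theta$.
   Context: Permutations of $\{1,\dots,N\}$ are written in one-line notation; $\mathfrak S_N$ is the set of all of them. An entry $\pi_j$ is a left-to-right maximum if $\pi_j>\pi_i$ for all $i<j$; $\mathrm{lrm}(\pi)$ is the number of left-to-right maxima. Definitions: - $[m]_\theta=\theta(\theta+1)\cdots(\theta+m-1)$; this equals $\sum_{\pi\in\mathfrak S_m}\theta^{\mathrm{lrm}(\pi)}$. - For $0\le k\le N-1$, $\pi$ is $k$-winnable if the first index $j>k$ with $\pi_j$ a left-to-right maximum has $\pi_j=N$. - $W(N,k)=\sum_{k\text{-winnable }\pi\in\mathfrak S_N}\theta^{\mathrm{lrm}(\pi)}$. - With $H_N(k)=\sum_{i=k+1}^{N-1}1/i$ for $0\le k\le N-1$, set $\kappa_N(\theta)=0$ if $\theta\le H_N(0)^{-1}$; $\kappa_N(\theta)=k$ if $H_N(k-1)^{-1}<\theta\le H_N(k)^{-1}$ for some $1\le k\le N-2$; and $\kappa_N(\theta)=N-1$ if $\theta>N-1$. $\kappa_N(\theta)$ is the number of initial rejections of an optimal strategy in the best choice game where $\pi\in\mathfrak S_N$ has probability $\theta^{\mathrm{lrm}(\pi)}/[N]_\theta$, and $W(N,\kappa_N(\theta))/[N]_\theta$ is the optimal winning probability. *)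

(* Defs.v *)
From mathcomp Require Import all_boot all_order all_fingroup.
From Stdlib Require Import Reals.

Set Implicit Arguments.
Unset Strict Implicit.
Unset Printing Implicit Defensive.

(* Permutations of {1,..,N} are modelled by 'S_N = {perm 'I_N}, i.e. values
   and positions 0,..,N-1 (shift by one; order-preserving). *)

Definition is_lrm (N : nat) (s : 'S_N) (j : 'I_N) : bool :=
  [forall i : 'I_N, (i < j)%N ==> (s i < s j)%N].

Definition lrm (N : nat) (s : 'S_N) : nat := #|[pred j : 'I_N | is_lrm s j]|.

(* pi is k-winnable: the first index j > k (1-based), i.e. j >= k (0-based),
   at which pi has a left-to-right maximum carries the value N (0-based: N-1). *)
Definition winnable (N k : nat) (s : 'S_N) : bool :=
  [exists j : 'I_N,
     [&& (k <= j)%N, is_lrm s j, (nat_of_ord (s j) == N.-1)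
       & [forall i : 'I_N, ((k <= i) && (i < j))%N ==> ~~ is_lrm s i]]].

Local Open Scope R_scope.

Definition W (N k : nat) (theta : R) : R :=
  foldr (fun s acc => theta ^ (lrm s) + acc) 0
        (filter (winnable k) (enum 'S_N)).

Fixpoint rising (theta : R) (m : nat) : R :=
  match m with
  | O => 1
  | S m' => rising theta m' * (theta + INR m')
  end.

(* H_N(k) = sum_{i=k+1}^{N-1} 1/i *)
Definition H (N k : nat) : R :=
  foldr (fun i acc => / INR i + acc) 0 (iota k.+1 (N.-1 - k)).

Definition Rleb (x y : R) : bool := if Rle_dec x y then true else false.
Definition Rltb (x y : R) : bool := if Rlt_dec x y then true else false.

Fixpoint kappa_search (N : nat) (theta : R) (k fuel : nat) : nat :=
  match fuel with
  | O => N.-1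
  | S f => if Rltb (/ H N k.-1) theta && Rleb theta (/ H N k) then k
           else kappa_search N theta k.+1 f
  end.

Definition kappa (N : nat) (theta : R) : nat :=
  if Rleb theta (/ H N 0) then 0%nat
  else if Rltb (INR N.-1) theta then N.-1
  else kappa_search N theta 1 (N.-2).

(* Main.v *)
Require Import Defs.
From Stdlib Require Import Reals Lra.
From mathcomp Require Import all_boot all_order all_fingroup.
From mathcomp Require Import Rstruct zify.
Set Implicit Arguments.
Unset Strict Implicit.
Unset Printing Implicit Defensive.

Lemma is_lrmP N (s : 'S_N) (j : 'I_N) :
  reflect (forall i : 'I_N, (i < j)%N -> (s i < s j)%N) (is_lrm s j).
Proof.
apply: (iffP forallP) => H i; first by move=> lt; have/implyP := H i; apply.
by apply/implyP; apply: H.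
Qed.

Lemma card_split_max n (P : pred 'I_n.+1) :
  #|P| = (#|[pred k : 'I_n | P (lift ord_max k)]| + P ord_max)%N.
Proof.
rewrite -!sum1_card !(big_mkcond (fun i => i \in _)) big_ord_recr.
congr addn.
apply: eq_bigr => i _; rewrite !inE.
by rewrite (_ : widen_ord _ i = lift ord_max i) //; apply: val_inj; rewrite /= /bump leqNgt ltn_ord.
Qed.

Section Lift.
Variables (n : nat) (j : 'I_n.+1) (s : 'S_n).
Let p := lift_perm ord_max j s.

Lemma lrm_lift_max : is_lrm p ord_max = (j == ord_max).
Proof.
have pm : p ord_max = j by rewrite /p lift_perm_id.
apply/is_lrmP/eqP => [H | E].
  rewrite -pm; set i := (p^-1)%g ord_max.
  have pi : p i = ord_max by rewrite permKV.
  case: (eqVneq i ord_max) => [E|NE]; first by rewrite -{1}E pi.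
  have lt : (i < @ord_max n)%N.
    rewrite ltn_neqAle -ltnS ltn_ord andbT; apply: contra NE => /eqP E.
    by apply/eqP/val_inj.
  by have := H i lt; rewrite pi ltnNge leq_ord.
move=> i lt.
have NE : i != ord_max by apply: contraTneq lt => ->; rewrite ltnn.
rewrite ltn_neqAle (inj_eq val_inj) (inj_eq (@perm_inj _ p)) NE pm E.
by rewrite leq_ord.
Qed.

Lemma lrm_lift_low (k : 'I_n) : is_lrm p (lift ord_max k) = is_lrm s k.
Proof.
have lm (i : 'I_n) : (lift (@ord_max n) i : nat) = i by apply: lift_max.
have lj (a b : 'I_n) : (lift j a < lift j b)%N = (a < b)%N.
  by rewrite /= /bump; case: leqP; case: leqP => *; lia.
apply/is_lrmP/is_lrmP => H i lt.
  by have := H (lift ord_max i); rewrite !lm lt /p !lift_perm_lift lj; apply.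
case: (unliftP ord_max i) => [i' Ei | Ei]; last first.
  by move: lt; rewrite Ei lm ltnNge ltnW.
rewrite Ei /p !lift_perm_lift lj; apply: H.
by move: lt; rewrite Ei !lm.
Qed.
End Lift.

Definition cnt N k (s : 'S_N) := #|[pred j : 'I_N | (k <= j)%N && is_lrm s j]|.

Lemma lrm_lift n (j : 'I_n.+1) (s : 'S_n) :
  lrm (lift_perm ord_max j s) = (lrm s + (j == ord_max))%N.
Proof.
rewrite /lrm card_split_max /= lrm_lift_max; congr addn.
by apply: eq_card => i; rewrite !inE lrm_lift_low.
Qed.

Lemma cnt_lift n k (j : 'I_n.+1) (s : 'S_n) :
  cnt k (lift_perm ord_max j s) = (cnt k s + ((k <= n) && (j == ord_max)))%N.
Proof.
rewrite /cnt card_split_max /= lrm_lift_max; congr addn.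
apply: eq_card => i; rewrite !inE lrm_lift_low.
by rewrite /bump (leqNgt n i) ltn_ord.
Qed.

Lemma winnable_cnt N k (s : 'S_N) : winnable k s = (cnt k s == 1%N).
Proof.
case: N s => [|n] s.
  apply/idP/idP; first by case/existsP => -[].
  have : (cnt k s <= #|'I_0|)%N by apply: max_card.
  by rewrite card_ord leqn0 => /eqP ->.
set pm := (s^-1)%g ord_max.
have spm : s pm = ord_max by rewrite permKV.
have neqv i : i != pm -> (s i < n)%N.
  move=> ne; rewrite ltn_neqAle -ltnS ltn_ord andbT.
  have : s i != s pm by rewrite (inj_eq (@perm_inj _ s)).
  by rewrite spm; apply: contra => /eqP E; apply/eqP/val_inj.
have lrm_pm : is_lrm s pm.
  by apply/is_lrmP => i lt; rewrite spm neqv //; apply: contraTneq lt => ->; rewrite ltnn.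
have nlrm (i : 'I_n.+1) : (pm < i)%N -> ~~ is_lrm s i.
  move=> lt; apply/negP => /is_lrmP /(_ pm lt); rewrite spm ltnNge.
  by rewrite -ltnS ltn_ord.
apply/idP/idP.
  case/existsP => x /and4P [kx lx sx /forallP nl].
  have xpm : x = pm by apply: (@perm_inj _ s); rewrite spm; apply: val_inj; apply/eqP.
  apply/eqP/(@eq_card1 _ x) => i; rewrite !inE.
  case: (ltngtP i x) => [lt | gt | /val_inj ->]; last by rewrite kx lx; apply/esym/eqP.
  - rewrite (_ : (i == x) = false); last first.
      by apply/negbTE/eqP => E; move: lt; rewrite E ltnn.
    by have := nl i; rewrite lt andbT; case: (k <= i)%N => //= /negbTE ->.
  - rewrite xpm in gt; rewrite (negbTE (nlrm _ gt)) andbF.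
    by apply/esym/negbTE/eqP => E; move: gt; rewrite E xpm ltnn.
case/card1P => x Hx.
have := Hx x; rewrite !inE eqxx => /andP [kx lx].
have xpm : x = pm.
  case: (leqP k pm) => [kp | pk].
    by have := Hx pm; rewrite !inE kp lrm_pm => /esym/eqP.
  case: (ltngtP x pm) => [lt | gt | /val_inj //].
  - by move: (leq_trans kx (ltnW lt)); rewrite leqNgt pk.
  - by move: lx; rewrite (negbTE (nlrm _ gt)).
apply/existsP; exists x; rewrite kx lx xpm spm /= ?eqxx /=.
apply/forallP => i; apply/implyP => /andP [ki lt]; apply/negP => li.
have := Hx i; rewrite !inE ki li => /esym/eqP ix.
by move: lt; rewrite ix xpm ltnn.
Qed.

Local Open Scope R_scope.

Lemma sum_perm_lift n (F : 'S_n.+1 -> R) :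
  \big[Rplus/0]_(q : 'S_n.+1) F q =
  \big[Rplus/0]_(j : 'I_n.+1) \big[Rplus/0]_(s : 'S_n) F (lift_perm ord_max j s).
Proof.
rewrite (partition_big (fun q : 'S_n.+1 => q ord_max) xpredT) //=.
apply: eq_bigr => j0 _.
set i0 := (@ord_max n).
rewrite (reindex (lift_perm i0 j0)); last first.
  pose ulsf i (s : 'S_n.+1) k := odflt k (unlift (s i) (s (lift i k))).
  have ulsfK i (s : 'S_n.+1) k: lift (s i) (ulsf i s k) = s (lift i k).
    rewrite /ulsf; have:= neq_lift i k.
    by rewrite -(can_eq (permK s)) => /unlift_some[] ? ? ->.
  have inj_ulsf: injective (ulsf i0 _).
    move=> s; apply: can_inj (ulsf (s i0) s^-1%g) _ => k'.
    by rewrite {1}/ulsf ulsfK !permK liftK.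
  exists (fun s => perm (inj_ulsf s)) => [s _ | s].
    by apply/permP=> k'; rewrite permE /ulsf lift_perm_lift lift_perm_id liftK.
  move/(s _ =P _) => si0; apply/permP=> k.
  case: (unliftP i0 k) => [k'|] ->; rewrite ?lift_perm_id //.
  by rewrite lift_perm_lift -si0 permE ulsfK.
by apply: eq_bigl => s; rewrite lift_perm_id eqxx.
Qed.

Lemma foldr_big (T : Type) (f : T -> R) (l : seq T) :
  foldr (fun s acc => f s + acc) 0 l = \big[Rplus/0]_(s <- l) f s.
Proof. by elim: l => [|a l IH] /=; rewrite ?big_nil ?big_cons ?IH. Qed.

Lemma iter_Rplus n c : iter n (Rplus c) 0 = INR n * c.
Proof. elim: n => [|n IH]; first by rewrite /=; lra. rewrite iterS IH S_INR; lra. Qed.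

Section Sums.
Variable theta : R.

Definition Sm (c n k : nat) : R :=
  \big[Rplus/0]_(s : 'S_n | cnt k s == c) theta ^ lrm s.

Lemma W_S N k : W N k theta = Sm 1 N k.
Proof.
rewrite /W foldr_big big_filter big_enum_cond /Sm.
by apply: eq_bigl => s; rewrite winnable_cnt.
Qed.

Lemma S_step c n k : Sm c n.+1 k =
  INR n * Sm c n k +
  theta * \big[Rplus/0]_(s : 'S_n | (cnt k s + (k <= n)%N)%N == c) theta ^ lrm s.
Proof.
rewrite /Sm big_mkcond sum_perm_lift big_ord_recr /=.
congr Rplus.
  rewrite (eq_bigr (fun _ => Sm c n k)); last first.
    move=> i _; rewrite /Sm [in RHS]big_mkcond; apply: eq_bigr => s _.
    rewrite cnt_lift lrm_lift.
    have -> : (widen_ord (leqnSn n) i == ord_max) = false.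
      by apply: negbTE; apply/eqP => /(congr1 val) /= E; move: (ltn_ord i); rewrite E ltnn.
    by rewrite andbF !addn0.
  by rewrite big_const_ord iter_Rplus.
rewrite big_distrr [in RHS]big_mkcond /=; apply: eq_bigr => s _.
rewrite cnt_lift lrm_lift eqxx andbT pow_add /=.
by case: ifP => _; lra.
Qed.

Lemma card_I0 (P : pred 'I_0) : #|P| = 0%N.
Proof. by apply/eqP; rewrite -leqn0; have := max_card P; rewrite card_ord. Qed.

Lemma S0_0 k : Sm 0 0 k = 1.
Proof.
rewrite /Sm (eq_bigr (fun _ => 1)); last by move=> s _; rewrite /lrm card_I0.
rewrite (eq_bigl xpredT); last by move=> s; rewrite /cnt card_I0.
by rewrite big_const card_Sn /=; lra.
Qed.

Lemma S1_0 k : Sm 1 0 k = 0.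
Proof.
rewrite /Sm (eq_bigl xpred0); last by move=> s; rewrite /cnt card_I0.
by rewrite big_pred0_eq.
Qed.

Lemma Z_step_le n k : (k <= n)%N -> Sm 0 n.+1 k = INR n * Sm 0 n k.
Proof.
move=> kn; rewrite S_step kn (eq_bigl xpred0); last by move=> s; rewrite addn1.
rewrite big_pred0_eq; lra.
Qed.

Lemma Z_step_gt n k : (n < k)%N -> Sm 0 n.+1 k = (INR n + theta) * Sm 0 n k.
Proof.
move=> kn; rewrite S_step leqNgt kn /= /Sm.
under [X in theta * X]eq_bigl => s do rewrite addn0.
by rewrite Rmult_plus_distr_r.
Qed.

Lemma O_step_le n k : (k <= n)%N -> Sm 1 n.+1 k = INR n * Sm 1 n k + theta * Sm 0 n k.
Proof.
move=> kn; rewrite S_step kn /Sm.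
by under [X in theta * X]eq_bigl => s do rewrite addn1 eqSS.
Qed.

Lemma O_step_gt n k : (n < k)%N -> Sm 1 n.+1 k = (INR n + theta) * Sm 1 n k.
Proof.
move=> kn; rewrite S_step leqNgt kn /= /Sm.
under [X in theta * X]eq_bigl => s do rewrite addn0.
by rewrite Rmult_plus_distr_r.
Qed.

Lemma Z_low n k : (n <= k)%N -> Sm 0 n k = rising theta n.
Proof.
elim: n => [|n IH] lt; first by rewrite S0_0.
rewrite Z_step_gt // IH ?(ltnW lt) // /=. ring.
Qed.

Lemma O_low n k : (n <= k)%N -> Sm 1 n k = 0.
Proof.
elim: n => [|n IH] lt; first by rewrite S1_0.
rewrite O_step_gt // IH ?(ltnW lt) //; lra.
Qed.
End Sums.

Lemma foldr_acc (l : seq nat) x :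
  foldr (fun i acc => / INR i + acc) x l = foldr (fun i acc => / INR i + acc) 0 l + x.
Proof. elim: l => [|a l IH] /=; [lra | rewrite IH; lra]. Qed.

Lemma H_succ N k : (k < N)%N -> H N.+1 k = H N k + / INR N.
Proof.
case: N => [|N] // kN; rewrite /H succnK.
have -> : (N.+1 - k = (N - k) + 1)%N by lia.
rewrite iotaD foldr_cat (_ : iota _ 1 = [:: N.+1]); last first.
  by rewrite /=; congr (_ :: _); lia.
cbn [foldr]; rewrite foldr_acc succnK; lra.
Qed.

Lemma H_pred N k : (0 < k)%N -> (k < N)%N -> H N k.-1 = / INR k + H N k.
Proof.
move=> k0 kN; rewrite /H prednK //.
by have -> : (N.-1 - k.-1 = (N.-1 - k).+1)%N by lia.
Qed.

Lemma H_nil N k : (N <= k.+1)%N -> H N k = 0.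
Proof. by move=> h; rewrite /H (_ : (N.-1 - k = 0)%N) //; lia. Qed.

Lemma O_formula theta k d : (0 < k)%N ->
  Sm theta 1 (k + d) k = theta * H (k + d) k.-1 * Sm theta 0 (k + d) k.
Proof.
move=> k0; elim: d => [|d IH].
  by rewrite addn0 O_low // H_nil ?prednK //; lra.
rewrite addnS O_step_le ?leq_addr // Z_step_le ?leq_addr // IH.
rewrite H_succ; last by lia.
have : INR (k + d) <> 0 by apply: not_0_INR; lia.
move=> nz; field; exact nz.
Qed.

Local Open Scope R_scope.

Lemma exp_le x y : x <= y -> exp x <= exp y.
Proof. case=> [h|->]; [left; exact: exp_increasing | right; reflexivity]. Qed.

Lemma exp_inv_bound x : x < 1 -> exp x * (1 - x) <= 1.
Proof.
move=> h; have := exp_ineq1_le (- x); rewrite exp_Ropp => H.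
have ep := exp_pos x.
have : (1 - x) * exp x <= / exp x * exp x by apply: Rmult_le_compat_r; lra.
rewrite Rinv_l; lra.
Qed.

Lemma rising_pos theta n : 0 < theta -> 0 < rising theta n.
Proof.
move=> t; elim: n => [|n IH] /=; first lra.
apply: Rmult_lt_0_compat => //; have := pos_INR n; lra.
Qed.

Lemma L1 theta (n : R) : 0 < theta -> 0 < n -> exp (- (theta / n)) * (theta + n) <= n.
Proof.
move=> t np; have := exp_ineq1_le (theta / n); rewrite exp_Ropp => H.
have ep := exp_pos (theta / n).
set E := exp (theta / n) in H ep *.
have q : (1 + theta / n) * / E <= 1.
  apply: (Rmult_le_reg_r E) => //; rewrite Rmult_assoc Rinv_l; lra.
replace (/ E * (theta + n)) with (n * ((1 + theta / n) * / E)) by (field; lra).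
apply: (Rle_trans _ (n * 1)); [apply: Rmult_le_compat_l; lra | lra].
Qed.

Lemma L2 theta (n : R) : 0 < theta -> 2 <= n ->
  n <= exp (- (theta / n) + theta ^ 2 * (/ (n - 1) - / n)) * (theta + n).
Proof.
move=> t n2.
set x := theta / (theta + n).
have ex : 1 - x <= exp (- x) by have := exp_ineq1_le (- x); lra.
have hx : - x <= - (theta / n) + theta ^ 2 * (/ (n - 1) - / n).
  have e1 : theta / n - x = theta ^ 2 * (/ n * / (theta + n)) by rewrite /x; field; lra.
  have e2 : / (n - 1) - / n = / n * / (n - 1) by field; lra.
  rewrite e2.
  have : / n * / (theta + n) <= / n * / (n - 1).
    apply: Rmult_le_compat_l; first by left; apply: Rinv_0_lt_compat; lra.
    apply: Rinv_le_contravar; lra.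
  have : 0 <= theta ^ 2 by apply: pow2_ge_0.
  nra.
have := exp_le hx => e.
have e3 : n = (1 - x) * (theta + n) by rewrite /x; field; lra.
rewrite {1}e3; apply: Rmult_le_compat_r; lra.
Qed.

Lemma Z_bounds theta k d : 0 < theta -> (2 <= k)%N ->
  exp (- (theta * H (k + d) k.-1)) * rising theta (k + d) <= Sm theta 0 (k + d) k /\
  Sm theta 0 (k + d) k <=
    exp (- (theta * H (k + d) k.-1) + theta ^ 2 * (/ (INR k - 1) - / (INR (k + d) - 1)))
    * rising theta (k + d).
Proof.
move=> t k2; elim: d => [|d [IHl IHu]].
  rewrite addn0 H_nil; last by rewrite prednK // (leq_trans _ k2).
  rewrite Z_low //.
  rewrite Rmult_0_r Ropp_0 exp_0 Rminus_diag Rmult_0_r Rplus_0_r exp_0 Rmult_1_l; split; right; reflexivity.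
rewrite (_ : (k + d.+1)%N = (k + d).+1); last by lia.
rewrite Z_step_le ?leq_addr // H_succ; last by lia.
have -> : rising theta (k + d).+1 = rising theta (k + d) * (theta + INR (k + d)) by [].
rewrite S_INR.
set x := INR (k + d) in IHl IHu *.
set h := H (k + d) k.-1 in IHl IHu *.
set Rn := rising theta (k + d) in IHl IHu *.
set Zn := Sm theta 0 (k + d) k in IHl IHu *.
have x2 : 2 <= x.
  rewrite /x; have -> : 2 = INR 2 by rewrite /=; lra.
  apply: le_INR; apply/leP; lia.
have Rp : 0 < Rn by apply: rising_pos.
split.
  have -> : - (theta * (h + / x)) = - (theta * h) + - (theta / x) by rewrite /Rdiv; ring.
  rewrite exp_plus.
  have Q := L1 t (ltac:(lra) : 0 < x).
  have P0 : 0 <= exp (- (theta * h)) * Rn by apply: Rmult_le_pos; [left; apply: exp_pos | lra].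
  have e1 : exp (- (theta * h)) * exp (- (theta / x)) * (Rn * (theta + x)) =
            (exp (- (theta * h)) * Rn) * (exp (- (theta / x)) * (theta + x)) by ring.
  rewrite e1.
  have := Rmult_le_compat_l _ _ _ P0 Q.
  have : 0 <= (Zn - exp (- (theta * h)) * Rn) * x by apply: Rmult_le_pos; lra.
  nra.
set A := - (theta * h) + theta ^ 2 * (/ (INR k - 1) - / (x - 1)) in IHu *.
have -> : - (theta * (h + / x)) + theta ^ 2 * (/ (INR k - 1) - / (x + 1 - 1)) =
          A + (- (theta / x) + theta ^ 2 * (/ (x - 1) - / x)).
  rewrite /A (_ : x + 1 - 1 = x); [rewrite /Rdiv; ring | ring].
rewrite exp_plus.
have Q := L2 t x2.
set D := exp (- (theta / x) + theta ^ 2 * (/ (x - 1) - / x)) in Q *.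
have P0 : 0 <= exp A * Rn by apply: Rmult_le_pos; [left; apply: exp_pos | lra].
have e1 : exp A * D * (Rn * (theta + x)) = (exp A * Rn) * (D * (theta + x)) by ring.
rewrite e1.
have := Rmult_le_compat_l _ _ _ P0 Q.
have : 0 <= (exp A * Rn - Zn) * x by apply: Rmult_le_pos; lra.
nra.
Qed.

Lemma INR_pos_le1 n : (0 < n)%N -> 1 <= INR n.
Proof. by move=> h; rewrite -/(INR 1); apply: le_INR; apply/leP. Qed.

Lemma H_low k d : INR (k.+1 + d) / INR k.+1 <= exp (H (k.+1 + d) k).
Proof.
have kp : 1 <= INR k.+1 by apply: INR_pos_le1.
elim: d => [|d IH].
  rewrite addn0 H_nil // exp_0 /Rdiv Rinv_r; lra.
rewrite (_ : (k.+1 + d.+1)%N = (k.+1 + d).+1); last by lia.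
rewrite H_succ; last by lia.
rewrite exp_plus S_INR.
set N := INR (k.+1 + d) in IH *.
have N1 : 1 <= N by apply: INR_pos_le1; lia.
have e := exp_ineq1_le (/ N).
have e0 : 0 <= N / INR k.+1 by apply: Rle_mult_inv_pos; lra.
have : N / INR k.+1 * (1 + / N) <= exp (H (k.+1 + d) k) * exp (/ N).
  apply: Rmult_le_compat => //; have : 0 < / N by apply: Rinv_0_lt_compat; lra.
  lra.
have -> : N / INR k.+1 * (1 + / N) = (N + 1) / INR k.+1 by field; lra.
done.
Qed.

Lemma H_up k d : (0 < k)%N -> exp (H (k.+1 + d) k) <= (INR (k.+1 + d) - 1) / INR k.
Proof.
move=> k0; have kp : 1 <= INR k by apply: INR_pos_le1.
elim: d => [|d IH].
  rewrite addn0 H_nil // exp_0 S_INR (_ : INR k + 1 - 1 = INR k) ?/Rdiv ?Rinv_r; lra.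
rewrite (_ : (k.+1 + d.+1)%N = (k.+1 + d).+1); last by lia.
rewrite H_succ; last by lia.
rewrite exp_plus S_INR.
set N := INR (k.+1 + d) in IH *.
have N2 : 2 <= N.
  have -> : 2 = INR 2 by rewrite /=; lra.
  apply: le_INR; apply/leP; lia.
have Ni : / N <= / 2 by apply: Rinv_le_contravar; lra.
have ep : 0 < exp (/ N) by apply: exp_pos.
have eb : exp (/ N) <= N / (N - 1).
  have e := exp_inv_bound (ltac:(lra) : / N < 1).
  apply: (Rmult_le_reg_r (1 - / N)); first lra.
  have -> : N / (N - 1) * (1 - / N) = 1 by field; lra.
  done.
have h0 : 0 <= exp (H (k.+1 + d) k) by left; apply: exp_pos.
have : exp (H (k.+1 + d) k) * exp (/ N) <= (N - 1) / INR k * (N / (N - 1)).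
  apply: Rmult_le_compat => //; lra.
have -> : (N - 1) / INR k * (N / (N - 1)) = (N + 1 - 1) / INR k by field; lra.
done.
Qed.

Lemma H_pos N r : (r.+1 < N)%N -> 0 < H N r.
Proof.
move=> h; have := H_low r (N - r.+1); rewrite (_ : (r.+1 + (N - r.+1))%N = N); last by lia.
move=> e.
have : 1 < INR N / INR r.+1.
  have r1 : 0 < INR r.+1 by apply: lt_0_INR; apply/ltP.
  have : INR r.+1 < INR N by apply: lt_INR; apply/ltP.
  move=> lt; apply: (Rmult_lt_reg_r (INR r.+1)) => //.
  rewrite /Rdiv Rmult_assoc Rinv_l; lra.
move=> g; apply: exp_lt_inv; rewrite exp_0; lra.
Qed.

Lemma search_spec N theta : 0 < theta -> forall fuel k, (0 < k)%N -> (k + fuel)%N = N.-1 ->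
  / H N k.-1 < theta -> theta <= INR N.-1 ->
  let r := kappa_search N theta k fuel in
  (0 < r)%N /\ (r.+1 < N)%N /\ / H N r.-1 < theta /\ theta <= / H N r.
Proof.
move=> t; elim=> [|f IH] k k0 kf lt le /=.
  rewrite addn0 in kf; exfalso.
  rewrite H_pred in lt; try lia.
  rewrite H_nil ?Rplus_0_r ?Rinv_inv in lt; last by lia.
  by rewrite kf in lt; lra.
rewrite /Defs.Rltb /Defs.Rleb.
case: Rlt_dec => [a|a] /=; last by exfalso; apply: a.
case: Rle_dec => [b|b] /=.
  by split=> //; split=> //; lia.
apply: IH => //; first lia.
by rewrite /=; lra.
Qed.

Lemma kappa_eventually theta : 0 < theta -> exists N0, forall N, (N0 <= N)%N ->
  let k := kappa N theta in
  (0 < k)%N /\ (k.+1 < N)%N /\ H N k <= / theta /\ / theta < H N k.-1.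
Proof.
move=> t.
have [n1 hn1] := INR_unbounded (Rmax (exp (/ theta)) (theta + 1)).
exists (maxn n1 3) => N hN k.
have N3 : (3 <= N)%N by lia.
have Nn1 : INR n1 <= INR N by apply: le_INR; apply/leP; lia.
have m1 := Rmax_l (exp (/ theta)) (theta + 1).
have m2 := Rmax_r (exp (/ theta)) (theta + 1).
have HN0 : / theta < H N 0.
  have := H_low 0 N.-1; rewrite (_ : (1 + N.-1)%N = N); last by lia.
  rewrite (_ : INR 1 = 1) // /Rdiv Rinv_1 Rmult_1_r => e.
  apply: exp_lt_inv; lra.
have ti : 0 < / theta by apply: Rinv_0_lt_compat.
have c1 : / H N 0 < theta.
  rewrite -(Rinv_inv theta); apply: Rinv_lt_contravar => //.
  apply: Rmult_lt_0_compat => //; lra.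
have c2 : theta <= INR N.-1.
  rewrite (_ : INR N.-1 = INR N - 1); first lra.
  have Np : (0 < N)%N by lia.
  rewrite -{2}(prednK Np) S_INR; ring.
have [r0 [r1 [r2 r3]]] : let r := kappa_search N theta 1 N.-2 in
  (0 < r)%N /\ (r.+1 < N)%N /\ / H N r.-1 < theta /\ theta <= / H N r.
  apply: search_spec => //; lia.
have -> : k = kappa_search N theta 1 N.-2.
  rewrite /k /kappa /Defs.Rltb /Defs.Rleb.
  case: Rle_dec => [a|a] /=; first lra.
  by case: Rlt_dec => [b|b] /=; first lra.
set r := kappa_search N theta 1 N.-2 in r0 r1 r2 r3 *.
have hp : 0 < H N r by apply: H_pos.
have hp' : 0 < H N r.-1 by apply: H_pos; lia.
split=> //; split=> //; split.
  rewrite -(Rinv_inv (H N r)); apply: Rinv_le_contravar => //.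
rewrite -(Rinv_inv (H N r.-1)); apply: Rinv_lt_contravar => //.
apply: Rmult_lt_0_compat => //; apply: Rinv_0_lt_compat => //.
Qed.

Lemma cv_crit (a : nat -> R) L (g : nat -> R) N0 :
  (forall N, (N0 <= N)%N -> Rabs (a N - L) <= g N) ->
  (forall eps, 0 < eps -> exists N1, forall N, (N1 <= N)%N -> g N < eps) ->
  Un_cv a L.
Proof.
move=> hb hg eps ep; have [N1 h1] := hg eps ep.
exists (maxn N0 N1) => N /leP hN; rewrite /Rdist.
apply: (Rle_lt_trans _ (g N)); [apply: hb | apply: h1]; lia.
Qed.

Lemma big_N (A : R) : exists N1, forall N, (N1 <= N)%N -> A < INR N.
Proof.
have [n hn] := INR_unbounded A; exists n => N hN.
have : INR n <= INR N by apply: le_INR; apply/leP.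
lra.
Qed.

Lemma final_bound theta x h u : 0 < theta -> 2 <= x ->
  1 < theta * h -> theta * h <= 1 + theta / x ->
  exp (- (theta * h)) <= u -> u <= exp (- (theta * h) + theta ^ 2 / (x - 1)) ->
  theta ^ 2 / (x - 1) <= / 2 ->
  Rabs (theta * h * u - exp (-1)) <= (2 * theta + 2 * theta ^ 2) / (x - 1).
Proof.
move=> t x2 p1 p2 ul uu y2.
set p := theta * h in p1 p2 ul uu *.
set y := theta ^ 2 / (x - 1) in uu y2 *.
set q := theta / x in p2.
have e0 : 0 < exp (-1) by apply: exp_pos.
have e1 : exp (-1) <= 1 by rewrite -exp_0; apply: exp_le; lra.
have q0 : 0 <= q by apply: Rle_mult_inv_pos; lra.
have y0 : 0 <= y by apply: Rle_mult_inv_pos; [apply: pow2_ge_0 | lra].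
have qq : q <= theta / (x - 1).
  apply: Rmult_le_compat_l; first lra.
  apply: Rinv_le_contravar; lra.
have rhs : 2 * (theta / (x - 1)) + 2 * y = (2 * theta + 2 * theta ^ 2) / (x - 1).
  by rewrite /y; field; lra.
have E1 : exp (-1) * (1 - q) <= u.
  apply: (Rle_trans _ (exp (- p))) => //.
  have : exp (-1) * exp (- q) <= exp (- p).
    by rewrite -exp_plus; apply: exp_le; lra.
  have := exp_ineq1_le (- q).
  move=> a b; apply: (Rle_trans _ (exp (-1) * exp (- q))) => //.
  apply: Rmult_le_compat_l; lra.
have E2 : u <= exp (-1) * (1 + 2 * y).
  apply: (Rle_trans _ _ _ uu); rewrite exp_plus.
  have ep : exp (- p) <= exp (-1) by apply: exp_le; lra.
  have ey : exp y <= 1 + 2 * y.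
    have := exp_inv_bound (ltac:(lra) : y < 1).
    have := exp_pos y => epos b.
    nra.
  apply: Rmult_le_compat => //; try (left; apply: exp_pos).
have u0 : 0 <= u by apply: (Rle_trans _ _ _ (Rlt_le _ _ (exp_pos _)) ul).
apply: Rabs_le; split.
  have : u <= p * u by nra.
  nra.
have : p * u <= (1 + q) * (exp (-1) * (1 + 2 * y)) by apply: Rmult_le_compat; lra.
have : exp (-1) * (q + 2 * y + 2 * q * y) <= q + 2 * y + q.
  have : 2 * q * y <= q by nra.
  nra.
nra.
Qed.

Lemma facts_AB theta N : 0 < theta ->
  let k := kappa N theta in
  (0 < k)%N -> (k.+1 < N)%N -> H N k <= / theta -> / theta < H N k.-1 ->
  INR N * exp (- / theta) <= INR k + 1 /\ INR k - 1 < (INR N - 1) * exp (- / theta).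
Proof.
move=> t k k0 k1 k2 k3.
have ee : exp (- / theta) * exp (/ theta) = 1 by rewrite -exp_plus Rplus_opp_l exp_0.
have ec := exp_pos (- / theta).
have kp : 1 <= INR k by apply: INR_pos_le1.
have Nk : INR k + 1 < INR N by rewrite -S_INR; apply: lt_INR; apply/ltP.
split.
  have := H_low k (N - k.+1)%N; rewrite (_ : (k.+1 + (N - k.+1))%N = N); last by lia.
  move=> e; have e2 : exp (H N k) <= exp (/ theta) by apply: exp_le.
  have : INR N / INR k.+1 <= exp (/ theta) by lra.
  rewrite S_INR => h.
  have : INR N <= exp (/ theta) * (INR k + 1).
    apply: (Rmult_le_reg_r (/ (INR k + 1))); first by apply: Rinv_0_lt_compat; lra.
    rewrite Rmult_assoc Rinv_r; lra.
  nra.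
case: (ltngtP k 1) => [kl|kk|k1e]; first by exfalso; lia.
  2: {
  rewrite k1e /= ; have : 0 < (INR N - 1) * exp (- / theta) by apply: Rmult_lt_0_compat; lra.
  lra. }
have := @H_up k (N - k.+1)%N k0; rewrite (_ : (k.+1 + (N - k.+1))%N = N); last by lia.
move=> e; rewrite H_pred // in k3; last by lia.
have e3 : exp (/ theta) < exp (/ INR k) * exp (H N k).
  by rewrite -exp_plus; apply: exp_increasing.
have x2 : 2 <= INR k.
  have -> : 2 = INR 2 by rewrite /=; lra.
  by apply: le_INR; apply/leP; lia.
have ik : / INR k <= / 2 by apply: Rinv_le_contravar; lra.
have e4 := exp_inv_bound (ltac:(lra) : / INR k < 1).
have eh := exp_pos (H N k).
have ek := exp_pos (/ INR k).
have : exp (/ theta) * (1 - / INR k) < (INR N - 1) / INR k.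
  apply: (Rlt_le_trans _ (exp (/ INR k) * exp (H N k) * (1 - / INR k))).
    apply: Rmult_lt_compat_r => //; lra.
  have -> : exp (/ INR k) * exp (H N k) * (1 - / INR k) =
            (exp (/ INR k) * (1 - / INR k)) * exp (H N k) by ring.
  apply: (Rle_trans _ (1 * exp (H N k))); last lra.
  by apply: Rmult_le_compat_r; lra.
have -> : exp (/ theta) * (1 - / INR k) = exp (/ theta) * (INR k - 1) / INR k by field; lra.
move=> h.
have : exp (/ theta) * (INR k - 1) < INR N - 1.
  apply: (Rmult_lt_reg_r (/ INR k)); first by apply: Rinv_0_lt_compat; lra.
  exact h.
nra.
Qed.

Theorem mainTheorem11 (theta : R) (Htheta : 0 < theta) :
  Un_cv (fun N => INR (kappa N theta) / INR N) (exp (- / theta)) /\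
  Un_cv (fun N => W N (kappa N theta) theta / rising theta N) (exp (-1)).
Proof.
have [N0 hN0] := kappa_eventually Htheta.
set c := exp (- / theta).
have c0 : 0 < c by apply: exp_pos.
have cdiv : forall X, c * (X / c) = X by move=> X; field; lra.
have c1 : c < 1 by rewrite /c -exp_0; apply: exp_increasing;
  have := Rinv_0_lt_compat _ Htheta; lra.
split.
  apply: (@cv_crit _ _ (fun N => / INR N) N0).
    move=> N hN; have [k0 [k1 [k2 k3]]] := hN0 N hN.
    have [A B] := facts_AB Htheta k0 k1 k2 k3; rewrite -/c in A B.
    set k := kappa N theta in k0 k1 k2 k3 A B *.
    have Np : 0 < INR N by apply: lt_0_INR; apply/ltP; lia.
    have e : INR k / INR N - c = (INR k - INR N * c) / INR N by field; lra.
    have ip : 0 < / INR N by apply: Rinv_0_lt_compat.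
    rewrite e /Rdiv Rabs_mult (Rabs_pos_eq (/ INR N)); last lra.
    rewrite -{2}(Rmult_1_l (/ INR N)).
    apply: Rmult_le_compat_r; first lra.
    apply: Rabs_le; nra.
  move=> eps ep; have [N1 h1] := big_N (/ eps).
  exists (maxn N1 1) => N hN.
  have := h1 N (leq_trans (leq_maxl _ _) hN) => h.
  rewrite -(Rinv_inv eps); apply: Rinv_lt_contravar => //.
  apply: Rmult_lt_0_compat; first by apply: Rinv_0_lt_compat.
  by apply: lt_0_INR; apply/ltP; lia.
set D := 2 * theta + 2 * theta ^ 2.
have D0 : 0 < D by rewrite /D; have := pow2_ge_0 theta; lra.
have t2 : 0 < theta ^ 2 by apply: pow_lt.
have [N2 h2] := big_N ((Rmax (2 * theta ^ 2) 1 + 2) / c).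
apply: (@cv_crit _ _ (fun N => D / (c * INR N - 2)) (maxn N0 N2)).
  move=> N hN.
  have [k0 [k1 [k2 k3]]] := hN0 N (leq_trans (leq_maxl _ _) hN).
  have [A B] := facts_AB Htheta k0 k1 k2 k3; rewrite -/c in A B.
  have hN2 := h2 N (leq_trans (leq_maxr _ _) hN).
  rewrite W_S.
  set k := kappa N theta in k0 k1 k2 k3 A B *.
  set x := INR k in A B *.
  have m1 := Rmax_l (2 * theta ^ 2) 1.
  have m2 := Rmax_r (2 * theta ^ 2) 1.
  have cN : Rmax (2 * theta ^ 2) 1 + 2 < c * INR N.
    have := Rmult_lt_compat_l c _ _ c0 hN2.
    by rewrite cdiv.
  have A' : c * INR N <= x + 1 by rewrite Rmult_comm.
  have x2 : 2 <= x by lra.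
  have kk : (2 <= k)%N.
    apply/leP; apply: INR_le; rewrite -/x; simpl; lra.
  set d := (N - k)%N.
  have Nkd : (k + d)%N = N by rewrite /d; lia.
  have [zl zu] := @Z_bounds theta k d Htheta kk.
  have Of := @O_formula theta k d k0.
  rewrite Nkd in zl zu Of.
  rewrite Of.
  set h := H N k.-1 in zl zu k3 *.
  set Z := Sm theta 0 N k in zl zu *.
  have Rp := @rising_pos theta N Htheta.
  set Rn := rising theta N in zl zu Rp *.
  have e : theta * h * Z / Rn = theta * h * (Z / Rn) by rewrite /Rdiv; ring.
  rewrite e.
  have hk : h = / x + H N k by rewrite /h H_pred //; lia.
  have N1 : 2 <= INR N by have := pos_INR N; nra.
  have y0 : theta ^ 2 / (x - 1) <= / 2.
    have : theta ^ 2 / (x - 1) <= theta ^ 2 / (2 * theta ^ 2).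
      apply: Rmult_le_compat_l; first lra.
      apply: Rinv_le_contravar; lra.
    have -> : theta ^ 2 / (2 * theta ^ 2) = / 2 by field; lra.
    done.
  apply: (Rle_trans _ (D / (x - 1))).
    apply: final_bound => //.
    - have := Rmult_lt_compat_l theta _ _ Htheta k3.
      by rewrite Rinv_r; lra.
    - rewrite hk Rmult_plus_distr_l.
      have := Rmult_le_compat_l theta _ _ (Rlt_le _ _ Htheta) k2.
      by rewrite Rinv_r; rewrite /Rdiv; lra.
    - apply: (Rmult_le_reg_r Rn) => //.
      by rewrite /Rdiv Rmult_assoc Rinv_l; lra.
    - apply: (Rmult_le_reg_r Rn) => //.
      rewrite /Rdiv Rmult_assoc Rinv_l ?Rmult_1_r; last lra.
      apply: (Rle_trans _ _ _ zu); apply: Rmult_le_compat_r; first lra.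
      apply: exp_le.
      have : 0 <= theta ^ 2 * / (INR N - 1).
        by apply: Rmult_le_pos; [lra | left; apply: Rinv_0_lt_compat; lra].
      rewrite -/x; lra.
  apply: Rmult_le_compat_l; first lra.
  apply: Rinv_le_contravar; lra.
move=> eps ep; have [N1 h1] := big_N ((D / eps + 2) / c).
exists N1 => N hN; have := h1 N hN => h.
have hc : D / eps + 2 < c * INR N.
  have := Rmult_lt_compat_l c _ _ c0 h.
  by rewrite cdiv.
have de : 0 < D / eps by apply: Rdiv_lt_0_compat.
apply: (Rmult_lt_reg_r (c * INR N - 2)); first lra.
rewrite /Rdiv Rmult_assoc Rinv_l; last lra.
have : D = D / eps * eps by field; lra.
nra.
Qed.
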